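(* Let $T$ be a commutative monad on a category $\mathcal{A}$ with finite products, with $\mathrm{Alg}(T)$ symmetric monoidal $(\otimes, I=T(1))$ and the free functor strong monoidal via $\xi\colon T(X)\otimes T(Y)\cong T(X\times Y)$. For every $\overline{T}$-coalgebra (basis) $b$ on an algebra $a\colon TX\to X$, the maps $d_b=(a\otimes a)\circ\xi^{-1}\circ T(\Delta)\circ b$ and $u_b=T(!)\circ b$ are homomorphisms of $\overline{T}$-coalgebras, so that $(d_b,u_b)$ is a comonoid in $\mathrm{CoAlg}(\overline{T})$. Consequently $\mathrm{CoAlg}(\overline{T})$ has finite products (given by the tensor $\otimes$ of carrier algebras, with final object the coalgebra $T(\eta_1)$ on $T(1)$), and the functor $\mathcal{A}\to\mathrm{CoAlg}(\overline{T})$, $Y\mapsto(T(Y),\mu_Y,T(\eta_Y))$, preserves finite products.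
   Context: $\mathrm{Alg}(T)$: Eilenberg–Moore algebras; $\overline{T}=FU$ the comonad on $\mathrm{Alg}(T)$ induced by the free-algebra adjunction, $\overline{T}(a)=\mu_X$, counit $a$, comultiplication $T(\eta_X)$. A basis ($\overline{T}$-coalgebra) on $a\colon TX\to X$ is $b\colon X\to TX$ with $b\circ a=\mu_X\circ T(b)$, $a\circ b=\mathrm{id}_X$, $T(\eta_X)\circ b=T(b)\circ b$. $\mathrm{CoAlg}(\overline{T})$ is the category of such coalgebras with algebra maps commuting with the coalgebra structures. The coalgebra structure on a tensor $X_1\otimes X_2$ of coalgebras $b_1,b_2$ is $X_1\otimes X_2\xrightarrow{b_1\otimes b_2}T(X_1)\otimes T(X_2)\xrightarrow{\xi}T(X_1\times X_2)\xrightarrow{T(\otimes)}T(X_1\otimes X_2)$, where $\otimes\colon X_1\times X_2\to X_1\otimes X_2$ is the universal bihomomorphism. *)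

(* Defs.v *)
Unset Implicit Arguments.
Unset Strict Implicit.

Record CartCat := {
  ob :> Type;
  hom : ob -> ob -> Type;
  idm : forall A, hom A A;
  comp : forall {A B D : ob}, hom B D -> hom A B -> hom A D;
  comp_idl : forall A B (f : hom A B), comp (idm B) f = f;
  comp_idr : forall A B (f : hom A B), comp f (idm A) = f;
  comp_assoc : forall A B D E (f : hom A B) (g : hom B D) (h : hom D E),
      comp h (comp g f) = comp (comp h g) f;
  one : ob;
  bang : forall A, hom A one;
  bang_uniq : forall A (f : hom A one), f = bang A;
  prod : ob -> ob -> ob;
  fst : forall A B, hom (prod A B) A;
  snd : forall A B, hom (prod A B) B;
  pair : forall {Z A B : ob}, hom Z A -> hom Z B -> hom Z (prod A B);
  fst_pair : forall Z A B (f : hom Z A) (g : hom Z B), comp (fst A B) (pair f g) = f;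
  snd_pair : forall Z A B (f : hom Z A) (g : hom Z B), comp (snd A B) (pair f g) = g;
  pair_eta : forall Z A B (h : hom Z (prod A B)),
      pair (comp (fst A B) h) (comp (snd A B) h) = h
}.
Arguments hom {c}.
Arguments idm {c}.
Arguments comp {c A B D}.
Arguments one {c}.
Arguments bang {c}.
Arguments prod {c}.
Arguments fst {c}.
Arguments snd {c}.
Arguments pair {c Z A B}.

Declare Scope cat_scope.
Notation "g ∘ f" := (comp g f) (at level 40, left associativity) : cat_scope.
Notation "A × B" := (prod A B) (at level 39, left associativity) : cat_scope.
Open Scope cat_scope.

Definition pmap {C : CartCat} {A B A' B' : C} (f : hom A A') (g : hom B B')
  : hom (A × B) (A' × B') := pair (f ∘ fst A B) (g ∘ snd A B).
Definition diag {C : CartCat} (A : C) : hom A (A × A) := pair (idm A) (idm A).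
Definition swap {C : CartCat} (A B : C) : hom (A × B) (B × A) :=
  pair (snd A B) (fst A B).
Definition assocr {C : CartCat} (A B D : C) : hom ((A × B) × D) (A × (B × D)) :=
  pair (fst A B ∘ fst (A × B) D) (pair (snd A B ∘ fst (A × B) D) (snd (A × B) D)).

Record Monad (C : CartCat) := {
  T : C -> C;
  fmap : forall {A B : C}, hom A B -> hom (T A) (T B);
  fmap_id : forall A, fmap (idm A) = idm (T A);
  fmap_comp : forall A B D (f : hom A B) (g : hom B D), fmap (g ∘ f) = fmap g ∘ fmap f;
  eta : forall A, hom A (T A);
  mu : forall A, hom (T (T A)) (T A);
  eta_nat : forall A B (f : hom A B), fmap f ∘ eta A = eta B ∘ f;
  mu_nat : forall A B (f : hom A B), fmap f ∘ mu A = mu B ∘ fmap (fmap f);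
  mu_eta_T : forall A, mu A ∘ eta (T A) = idm (T A);
  mu_T_eta : forall A, mu A ∘ fmap (eta A) = idm (T A);
  mu_assoc : forall A, mu A ∘ fmap (mu A) = mu A ∘ mu (T A)
}.
Arguments T {C} m.
Arguments fmap {C} m {A B}.
Arguments eta {C} m.
Arguments mu {C} m.

Record StrongMonad (C : CartCat) := {
  smon :> Monad C;
  st : forall A B : C, hom (A × T smon B) (T smon (A × B));
  st_nat : forall A A' B B' (f : hom A A') (g : hom B B'),
      st A' B' ∘ pmap f (fmap smon g) = fmap smon (pmap f g) ∘ st A B;
  st_unit : forall B, fmap smon (snd one B) ∘ st one B = snd one (T smon B);
  st_assoc : forall A B D,
      fmap smon (assocr A B D) ∘ st (A × B) D
      = st A (B × D) ∘ pmap (idm A) (st B D) ∘ assocr A B (T smon D);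
  st_eta : forall A B, st A B ∘ pmap (idm A) (eta smon B) = eta smon (A × B);
  st_mu : forall A B, st A B ∘ pmap (idm A) (mu smon B)
                      = mu smon (A × B) ∘ fmap smon (st A B) ∘ st A (T smon B)
}.
Arguments st {C} s.


Definition cst {C} (M : StrongMonad C) (A B : C) : hom (T M A × B) (T M (A × B)) :=
  fmap M (swap B A) ∘ st M B A ∘ swap (T M A) B.
Definition dstL {C} (M : StrongMonad C) (A B : C) : hom (T M A × T M B) (T M (A × B)) :=
  mu M (A × B) ∘ fmap M (cst M A B) ∘ st M (T M A) B.
Definition dstR {C} (M : StrongMonad C) (A B : C) : hom (T M A × T M B) (T M (A × B)) :=
  mu M (A × B) ∘ fmap M (st M A B) ∘ cst M A (T M B).
Definition commutative {C} (M : StrongMonad C) : Prop :=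
  forall A B : C, dstL M A B = dstR M A B.

Definition is_alg {C} (M : Monad C) (X : C) (a : hom (T M X) X) : Prop :=
  a ∘ eta M X = idm X /\ a ∘ fmap M a = a ∘ mu M X.

Record Alg {C} (M : Monad C) := {
  acar : C;
  act : hom (T M acar) acar;
  act_law : is_alg M acar act
}.
Arguments acar {C M}.
Arguments act {C M}.

Definition is_alg_hom {C} {M : Monad C} (A B : Alg M) (f : hom (acar A) (acar B)) : Prop :=
  f ∘ act A = act B ∘ fmap M f.

Lemma free_alg_law {C} (M : Monad C) (Y : C) : is_alg M (T M Y) (mu M Y).
Proof. split; [apply mu_eta_T | apply mu_assoc]. Qed.

Definition free {C} (M : Monad C) (Y : C) : Alg M :=
  {| acar := T M Y; act := mu M Y; act_law := free_alg_law M Y |}.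

Definition is_bihom {C} (M : StrongMonad C) (A B Z : Alg M)
    (f : hom (acar A × acar B) (acar Z)) : Prop :=
  f ∘ pmap (idm (acar A)) (act B) = act Z ∘ fmap M f ∘ st M (acar A) (acar B) /\
  f ∘ pmap (act A) (idm (acar B)) = act Z ∘ fmap M f ∘ cst M (acar A) (acar B).

Record Setting (C : CartCat) := {
  M :> StrongMonad C;
  M_comm : commutative M;
  tens : Alg M -> Alg M -> Alg M;
  tb : forall A B : Alg M, hom (acar A × acar B) (acar (tens A B));
  tb_bihom : forall A B, is_bihom M A B (tens A B) (tb A B);
  tb_univ : forall (A B Z : Alg M) (f : hom (acar A × acar B) (acar Z)),
      is_bihom M A B Z f ->
      exists g : hom (acar (tens A B)) (acar Z),
        (is_alg_hom (tens A B) Z g /\ g ∘ tb A B = f) /\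
        forall g', is_alg_hom (tens A B) Z g' /\ g' ∘ tb A B = f -> g' = g;
  tmap : forall (A A' B B' : Alg M), hom (acar A) (acar A') -> hom (acar B) (acar B') ->
      hom (acar (tens A B)) (acar (tens A' B'));
  tmap_spec : forall A A' B B' (f : hom (acar A) (acar A')) (g : hom (acar B) (acar B')),
      is_alg_hom A A' f -> is_alg_hom B B' g ->
      is_alg_hom (tens A B) (tens A' B') (tmap A A' B B' f g) /\
      tmap A A' B B' f g ∘ tb A B = tb A' B' ∘ pmap f g;
  alpha : forall A B D : Alg M,
      hom (acar (tens (tens A B) D)) (acar (tens A (tens B D)));
  alpha_inv : forall A B D : Alg M,
      hom (acar (tens A (tens B D))) (acar (tens (tens A B) D));
  lam : forall A : Alg M, hom (acar (tens (free M one) A)) (acar A);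
  lam_inv : forall A : Alg M, hom (acar A) (acar (tens (free M one) A));
  rho : forall A : Alg M, hom (acar (tens A (free M one))) (acar A);
  rho_inv : forall A : Alg M, hom (acar A) (acar (tens A (free M one)));
  sigma : forall A B : Alg M, hom (acar (tens A B)) (acar (tens B A));
  alpha_hom : forall A B D, is_alg_hom _ _ (alpha A B D);
  alpha_iso : forall A B D, alpha A B D ∘ alpha_inv A B D = idm _ /\
                            alpha_inv A B D ∘ alpha A B D = idm _;
  alpha_tb : forall A B D,
      alpha A B D ∘ tb (tens A B) D ∘ pmap (tb A B) (idm (acar D))
      = tb A (tens B D) ∘ pmap (idm (acar A)) (tb B D) ∘ assocr (acar A) (acar B) (acar D);
  alpha_nat : forall A A' B B' D D' f g h,
      is_alg_hom A A' f -> is_alg_hom B B' g -> is_alg_hom D D' h ->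
      alpha A' B' D' ∘ tmap _ _ _ _ (tmap A A' B B' f g) h
      = tmap _ _ _ _ f (tmap B B' D D' g h) ∘ alpha A B D;
  lam_hom : forall A, is_alg_hom _ _ (lam A);
  lam_iso : forall A, lam A ∘ lam_inv A = idm _ /\ lam_inv A ∘ lam A = idm _;
  lam_tb : forall A, lam A ∘ tb (free M one) A
                     = act A ∘ fmap M (snd one (acar A)) ∘ cst M one (acar A);
  lam_nat : forall A A' f, is_alg_hom A A' f ->
      lam A' ∘ tmap (free M one) (free M one) A A' (idm (T M one)) f = f ∘ lam A;
  rho_hom : forall A, is_alg_hom _ _ (rho A);
  rho_iso : forall A, rho A ∘ rho_inv A = idm _ /\ rho_inv A ∘ rho A = idm _;
  rho_tb : forall A, rho A ∘ tb A (free M one)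
                     = act A ∘ fmap M (fst (acar A) one) ∘ st M (acar A) one;
  rho_nat : forall A A' f, is_alg_hom A A' f ->
      rho A' ∘ tmap A A' (free M one) (free M one) f (idm (T M one)) = f ∘ rho A;
  sigma_hom : forall A B, is_alg_hom _ _ (sigma A B);
  sigma_tb : forall A B, sigma A B ∘ tb A B = tb B A ∘ swap (acar A) (acar B);
  sigma_invol : forall A B, sigma B A ∘ sigma A B = idm _;
  sigma_nat : forall A A' B B' f g, is_alg_hom A A' f -> is_alg_hom B B' g ->
      sigma A' B' ∘ tmap A A' B B' f g = tmap B B' A A' g f ∘ sigma A B;
  pentagon : forall A B D E,
      alpha A B (tens D E) ∘ alpha (tens A B) D E
      = tmap _ _ _ _ (idm (acar A)) (alpha B D E) ∘ alpha A (tens B D) E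
        ∘ tmap _ _ _ _ (alpha A B D) (idm (acar E));
  triangle : forall A B,
      tmap _ _ _ _ (idm (acar A)) (lam B) ∘ alpha A (free M one) B
      = tmap _ _ _ _ (rho A) (idm (acar B));
  hexagon : forall A B D,
      alpha B D A ∘ sigma A (tens B D) ∘ alpha A B D
      = tmap _ _ _ _ (idm (acar B)) (sigma A D) ∘ alpha B A D
        ∘ tmap _ _ _ _ (sigma A B) (idm (acar D));
  xi : forall X Y : C, hom (acar (tens (free M X) (free M Y))) (T M (X × Y));
  xi_inv : forall X Y : C, hom (T M (X × Y)) (acar (tens (free M X) (free M Y)));
  xi_hom : forall X Y, is_alg_hom (tens (free M X) (free M Y)) (free M (X × Y)) (xi X Y);
  xi_iso : forall X Y, xi X Y ∘ xi_inv X Y = idm _ /\ xi_inv X Y ∘ xi X Y = idm _;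
  xi_tb : forall X Y, xi X Y ∘ tb (free M X) (free M Y) = dstL M X Y;
  xi_nat : forall X X' Y Y' (f : hom X X') (g : hom Y Y'),
      xi X' Y' ∘ tmap (free M X) (free M X') (free M Y) (free M Y') (fmap M f) (fmap M g) = fmap M (pmap f g) ∘ xi X Y;
  xi_assoc : forall X Y Z,
      fmap M (assocr X Y Z) ∘ xi (X × Y) Z ∘ tmap _ (free M (X × Y)) _ (free M Z) (xi X Y) (idm _)
      = xi X (Y × Z) ∘ tmap (free M X) (free M X) _ (free M (Y × Z)) (idm _) (xi Y Z)
        ∘ alpha (free M X) (free M Y) (free M Z);
  xi_lunit : forall X, fmap M (snd one X) ∘ xi one X = lam (free M X);
  xi_runit : forall X, fmap M (fst X one) ∘ xi X one = rho (free M X);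
  xi_sym : forall X Y, fmap M (swap X Y) ∘ xi X Y = xi Y X ∘ sigma (free M X) (free M Y)
}.
Arguments tens {C} s.
Arguments tb {C} s.
Arguments tmap {C} s {A A' B B'}.
Arguments alpha {C} s.
Arguments lam {C} s.
Arguments rho {C} s.
Arguments xi {C} s.
Arguments xi_inv {C} s.

Definition is_coalg {C} (M : Monad C) (A : Alg M) (b : hom (acar A) (T M (acar A))) : Prop :=
  b ∘ act A = mu M (acar A) ∘ fmap M b /\
  act A ∘ b = idm (acar A) /\
  fmap M (eta M (acar A)) ∘ b = fmap M b ∘ b.

Definition is_coalg_hom {C} (M : Monad C) (A B : Alg M)
    (bA : hom (acar A) (T M (acar A))) (bB : hom (acar B) (T M (acar B)))
    (f : hom (acar A) (acar B)) : Prop :=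
  is_alg_hom A B f /\ bB ∘ f = fmap M f ∘ bA.

Definition tens_coalg {C} (S : Setting C) (A1 A2 : Alg S)
    (b1 : hom (acar A1) (T S (acar A1))) (b2 : hom (acar A2) (T S (acar A2)))
  : hom (acar (tens S A1 A2)) (T S (acar (tens S A1 A2))) :=
  fmap S (tb S A1 A2) ∘ xi S (acar A1) (acar A2)
  ∘ tmap S (A' := free S (acar A1)) (B' := free S (acar A2)) b1 b2.

Definition unitA {C} (S : Setting C) : Alg S := free S one.
Definition free_coalg {C} (M : Monad C) (Y : C) : hom (T M Y) (T M (T M Y)) :=
  fmap M (eta M Y).

Definition d_b {C} (S : Setting C) (A : Alg S) (b : hom (acar A) (T S (acar A)))
  : hom (acar A) (acar (tens S A A)) :=
  tmap S (A := free S (acar A)) (B := free S (acar A)) (act A) (act A)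
  ∘ xi_inv S (acar A) (acar A) ∘ fmap S (diag (acar A)) ∘ b.
Definition u_b {C} (S : Setting C) (A : Alg S) (b : hom (acar A) (T S (acar A)))
  : hom (acar A) (T S one) :=
  fmap S (bang (acar A)) ∘ b.

Definition coalg_terminal {C} (M : Monad C) (A : Alg M) (b : hom (acar A) (T M (acar A))) : Prop :=
  forall (Z : Alg M) (c : hom (acar Z) (T M (acar Z))), is_coalg M Z c ->
    exists h, is_coalg_hom M Z A c b h /\
      forall h', is_coalg_hom M Z A c b h' -> h' = h.

Definition coalg_product {C} (M : Monad C)
    (A1 A2 P : Alg M)
    (b1 : hom (acar A1) (T M (acar A1))) (b2 : hom (acar A2) (T M (acar A2)))
    (bP : hom (acar P) (T M (acar P)))
    (q1 : hom (acar P) (acar A1)) (q2 : hom (acar P) (acar A2)) : Prop :=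
  is_coalg_hom M P A1 bP b1 q1 /\ is_coalg_hom M P A2 bP b2 q2 /\
  forall (Z : Alg M) (c : hom (acar Z) (T M (acar Z))), is_coalg M Z c ->
  forall f1 f2, is_coalg_hom M Z A1 c b1 f1 -> is_coalg_hom M Z A2 c b2 f2 ->
    exists h, (is_coalg_hom M Z P c bP h /\ q1 ∘ h = f1 /\ q2 ∘ h = f2) /\
      forall h', is_coalg_hom M Z P c bP h' /\ q1 ∘ h' = f1 /\ q2 ∘ h' = f2 -> h' = h.

(* Main.v *)
Require Import Defs.

Ltac nrm := repeat rewrite <- comp_assoc; rewrite ?comp_idl, ?comp_idr.

Lemma ch2 {C : CartCat} {B D E : C} {x : hom D E} {y : hom B D} {z : hom B E} :
  x ∘ y = z -> forall A (r : hom A B), x ∘ (y ∘ r) = z ∘ r.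
Proof. intros H A r. rewrite comp_assoc, H. reflexivity. Qed.
Lemma ch3 {C : CartCat} {B D E F : C} {x : hom E F} {y : hom D E} {w : hom B D} {z : hom B F} :
  x ∘ (y ∘ w) = z -> forall A (r : hom A B), x ∘ (y ∘ (w ∘ r)) = z ∘ r.
Proof. intros H A r. rewrite <- H. rewrite !comp_assoc. reflexivity. Qed.
Lemma ch4 {C : CartCat} {B D E F G : C} {x : hom F G} {y : hom E F} {w : hom D E} {v : hom B D} {z : hom B G} :
  x ∘ (y ∘ (w ∘ v)) = z -> forall A (r : hom A B), x ∘ (y ∘ (w ∘ (v ∘ r))) = z ∘ r.
Proof. intros H A r. rewrite <- H. rewrite !comp_assoc. reflexivity. Qed.

Ltac rw E := let H := fresh "Hrw" in pose proof E as H; first [rewrite H | rewrite (ch2 H) | rewrite (ch3 H) | rewrite (ch4 H)]; clear H; nrm.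

Section Cat.
Context {C : CartCat}.

Lemma fst_pair_r {Z A B W : C} (f : hom Z A) (g : hom Z B) (r : hom W Z) :
  fst A B ∘ (pair f g ∘ r) = f ∘ r.
Proof. apply ch2, fst_pair. Qed.
Lemma snd_pair_r {Z A B W : C} (f : hom Z A) (g : hom Z B) (r : hom W Z) :
  snd A B ∘ (pair f g ∘ r) = g ∘ r.
Proof. apply ch2, snd_pair. Qed.

Lemma pair_ext {Z A B : C} (h h' : hom Z (A × B)) :
  fst A B ∘ h = fst A B ∘ h' -> snd A B ∘ h = snd A B ∘ h' -> h = h'.
Proof. intros H1 H2. rewrite <- (pair_eta _ _ _ _ h), <- (pair_eta _ _ _ _ h'), H1, H2. reflexivity. Qed.

Lemma pair_comp {Z A B W : C} (f : hom Z A) (g : hom Z B) (h : hom W Z) :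
  pair f g ∘ h = pair (f ∘ h) (g ∘ h).
Proof. apply pair_ext; nrm; rewrite ?fst_pair_r, ?snd_pair_r, ?fst_pair, ?snd_pair; reflexivity. Qed.

Lemma pair_fs {A B : C} : pair (fst A B) (snd A B) = idm (A × B).
Proof. apply pair_ext; rewrite ?fst_pair, ?snd_pair, ?comp_idr; reflexivity. Qed.

Lemma bang_comp {A B : C} (f : hom A B) : bang B ∘ f = bang A.
Proof. apply bang_uniq. Qed.
Lemma bang_comp_r {A B W : C} (f : hom A B) (r : hom W A) : bang B ∘ (f ∘ r) = bang A ∘ r.
Proof. apply ch2, bang_comp. Qed.
End Cat.

Ltac psimp := unfold pmap, diag, swap, assocr;
  repeat (nrm; rewrite ?pair_comp, ?fst_pair_r, ?snd_pair_r, ?fst_pair, ?snd_pair, ?bang_comp_r, ?bang_comp, ?pair_fs).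

Section Cat2.
Context {C : CartCat}.
Lemma pmap_comp {A B A' B' A'' B'' : C} (f : hom A A') (g : hom B B') (f' : hom A' A'') (g' : hom B' B'') :
  pmap f' g' ∘ pmap f g = pmap (f' ∘ f) (g' ∘ g).
Proof. psimp. reflexivity. Qed.
Lemma pmap_diag {A B : C} (f : hom A B) : pmap f f ∘ diag A = diag B ∘ f.
Proof. psimp. reflexivity. Qed.
Lemma assoc_diag (A : C) : assocr A A A ∘ (pmap (diag A) (idm A) ∘ diag A) = pmap (idm A) (diag A) ∘ diag A.
Proof. psimp. reflexivity. Qed.
End Cat2.

Section Mon.
Context {C : CartCat} (S : Setting C).

Lemma fmap_eq2 {A B D : C} {x : hom B D} {y : hom A B} {z : hom A D} :
  x ∘ y = z -> fmap S x ∘ fmap S y = fmap S z.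
Proof. intros H. rewrite <- fmap_comp, H. reflexivity. Qed.
Lemma fmap_eq3 {A B D E : C} {x : hom D E} {y : hom B D} {w : hom A B} {z : hom A E} :
  x ∘ (y ∘ w) = z -> fmap S x ∘ (fmap S y ∘ fmap S w) = fmap S z.
Proof. intros H. rewrite <- !fmap_comp, H. reflexivity. Qed.

Lemma st_natl {A A' B : C} (f : hom A A') :
  st S A' B ∘ pmap f (idm (T S B)) = fmap S (pmap f (idm B)) ∘ st S A B.
Proof. pose proof (st_nat _ S A A' B B f (idm B)) as H. rewrite fmap_id in H. exact H. Qed.

Lemma Tsnd_st (A B : C) : fmap S (snd A B) ∘ st S A B = snd A (T S B).
Proof.
  assert (E: snd A B = snd one B ∘ pmap (bang A) (idm B)) by (psimp; reflexivity).
  rewrite E, fmap_comp. nrm. rw (eq_sym (st_natl (B:=B) (bang A))).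
  rw (st_unit _ S B). psimp. reflexivity.
Qed.

Lemma swap_swap (A B : C) : swap B A ∘ swap A B = idm (A × B).
Proof. apply pair_ext; psimp; reflexivity. Qed.

Lemma Tfst_cst (A B : C) : fmap S (fst A B) ∘ cst S A B = fst (T S A) B.
Proof.
  unfold cst. nrm.
  assert (E: fst A B ∘ swap B A = snd B A) by (psimp; reflexivity).
  rw (fmap_eq2 E). rw (Tsnd_st B A). psimp. reflexivity.
Qed.

Lemma cst_eta (A B : C) : cst S A B ∘ pmap (eta S A) (idm B) = eta S (A × B).
Proof.
  unfold cst. nrm.
  assert (E1: swap (T S A) B ∘ pmap (eta S A) (idm B) = pmap (idm B) (eta S A) ∘ swap A B)
    by (psimp; reflexivity).
  rw E1. rw (st_eta _ S B A). rw (eta_nat _ S _ _ (swap B A)). rw (swap_swap A B).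
  reflexivity.
Qed.

Lemma cst_nat {A A' B B' : C} (f : hom A A') (g : hom B B') :
  cst S A' B' ∘ pmap (fmap S f) g = fmap S (pmap f g) ∘ cst S A B.
Proof.
  unfold cst. nrm.
  assert (E1: swap (T S A') B' ∘ pmap (fmap S f) g = pmap g (fmap S f) ∘ swap (T S A) B)
    by (psimp; reflexivity).
  rw E1. rw (st_nat _ S _ _ _ _ g f).
  assert (E: swap B' A' ∘ pmap g f = pmap f g ∘ swap B A) by (psimp; reflexivity).
  rw (fmap_eq2 E). rewrite fmap_comp. nrm. reflexivity.
Qed.

Lemma dstL_eta (A B : C) : dstL S A B ∘ pmap (eta S A) (eta S B) = eta S (A × B).
Proof.
  unfold dstL. nrm.
  assert (E: pmap (eta S A) (eta S B) = pmap (idm (T S A)) (eta S B) ∘ pmap (eta S A) (idm B))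
    by (psimp; reflexivity).
  rewrite E. nrm. rw (st_eta _ S (T S A) B). rw (eta_nat _ S _ _ (cst S A B)).
  rw (mu_eta_T _ S (A × B)). apply cst_eta.
Qed.

Lemma dstL_nat {A A' B B' : C} (f : hom A A') (g : hom B B') :
  dstL S A' B' ∘ pmap (fmap S f) (fmap S g) = fmap S (pmap f g) ∘ dstL S A B.
Proof.
  unfold dstL. nrm. rw (st_nat _ S _ _ _ _ (fmap S f) g).
  rw (fmap_eq2 (cst_nat f g)). rewrite fmap_comp. nrm.
  rw (eq_sym (mu_nat _ S _ _ (pmap f g))). reflexivity.
Qed.

Lemma Tfst_dstL (A B : C) :
  fmap S (fst A B) ∘ dstL S A B = mu S A ∘ (fmap S (fst (T S A) B) ∘ st S (T S A) B).
Proof.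
  unfold dstL. nrm. rw (mu_nat _ S _ _ (fst A B)). rw (fmap_eq2 (Tfst_cst A B)). reflexivity.
Qed.

Lemma Tsnd_dstR (A B : C) :
  fmap S (snd A B) ∘ dstR S A B = mu S B ∘ (fmap S (snd A (T S B)) ∘ cst S A (T S B)).
Proof.
  unfold dstR. nrm. rw (mu_nat _ S _ _ (snd A B)). rw (fmap_eq2 (Tsnd_st A B)). reflexivity.
Qed.

Lemma bihom_ext (X Y D : Alg S) (G : hom (acar X × acar Y) (acar D)) :
  is_bihom S X Y D G ->
  act D ∘ (fmap S G ∘ dstL S (acar X) (acar Y)) = G ∘ pmap (act X) (act Y).
Proof.
  intros [H1 H2]. destruct (act_law _ D) as [_ HD].
  unfold dstL. nrm.
  rw (mu_nat _ S _ _ G). rw (eq_sym HD).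
  assert (E: act D ∘ (fmap S G ∘ cst S (acar X) (acar Y)) = G ∘ pmap (act X) (idm (acar Y)))
    by (rewrite H2; nrm; reflexivity).
  rw (fmap_eq3 E). rewrite fmap_comp. nrm.
  rw (eq_sym (st_natl (B:=acar Y) (act X))).
  assert (E2: act D ∘ (fmap S G ∘ st S (acar X) (acar Y)) = G ∘ pmap (idm (acar X)) (act Y))
    by (rewrite H1; nrm; reflexivity).
  rw E2. psimp. reflexivity.
Qed.

Lemma alg_hom_comp {A B D : Alg S} (f : hom (acar A) (acar B)) (g : hom (acar B) (acar D)) :
  is_alg_hom A B f -> is_alg_hom B D g -> is_alg_hom A D (g ∘ f).
Proof.
  unfold is_alg_hom. intros Hf Hg. nrm. rewrite Hf. rw Hg. rewrite fmap_comp. nrm. reflexivity.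
Qed.
Lemma alg_hom_id (A : Alg S) : is_alg_hom A A (idm (acar A)).
Proof. unfold is_alg_hom. rewrite fmap_id, comp_idl, comp_idr. reflexivity. Qed.
Lemma fmap_alg_hom {X Y : C} (f : hom X Y) : is_alg_hom (free S X) (free S Y) (fmap S f).
Proof. unfold is_alg_hom. simpl. apply mu_nat. Qed.
Lemma mu_alg_hom (Y : C) : is_alg_hom (free S (T S Y)) (free S Y) (mu S Y).
Proof. unfold is_alg_hom. simpl. symmetry. apply mu_assoc. Qed.
Lemma act_alg_hom (A : Alg S) : is_alg_hom (free S (acar A)) A (act A).
Proof. unfold is_alg_hom. simpl. destruct (act_law _ A) as [_ H]. symmetry. exact H. Qed.
Lemma iso_alg_hom {A B : Alg S} (f : hom (acar A) (acar B)) (g : hom (acar B) (acar A)) :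
  is_alg_hom A B f -> g ∘ f = idm _ -> f ∘ g = idm _ -> is_alg_hom B A g.
Proof.
  unfold is_alg_hom. intros Hf H1 H2.
  transitivity (g ∘ (act B ∘ fmap S (f ∘ g))).
  - rewrite H2, fmap_id, comp_idr. reflexivity.
  - rewrite fmap_comp. nrm. rw (eq_sym Hf). rw H1. reflexivity.
Qed.

Lemma free_ext {Y : C} {B : Alg S} (g : hom (T S Y) (acar B)) :
  is_alg_hom (free S Y) B g -> g = act B ∘ fmap S (g ∘ eta S Y).
Proof.
  unfold is_alg_hom. simpl. intros H. rewrite fmap_comp. rw (eq_sym H).
  rewrite mu_T_eta, comp_idr. reflexivity.
Qed.
Lemma free_ext2 {Y : C} {B : Alg S} (g h : hom (T S Y) (acar B)) :
  is_alg_hom (free S Y) B g -> is_alg_hom (free S Y) B h -> g ∘ eta S Y = h ∘ eta S Y -> g = h.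
Proof. intros Hg Hh E. rewrite (free_ext g Hg), (free_ext h Hh), E. reflexivity. Qed.

End Mon.

Section Set1.
Context {C : CartCat} (S : Setting C).

Lemma fmap_eq4 {A B D E F : C} {x : hom E F} {y : hom D E} {w : hom B D} {v : hom A B} {z : hom A F} :
  x ∘ (y ∘ (w ∘ v)) = z -> fmap S x ∘ (fmap S y ∘ (fmap S w ∘ fmap S v)) = fmap S z.
Proof. intros H. rewrite <- !fmap_comp, H. reflexivity. Qed.

Lemma xi_inv_hom (X Y : C) :
  is_alg_hom (free S (X × Y)) (tens S (free S X) (free S Y)) (xi_inv S X Y).
Proof.
  destruct (xi_iso _ S X Y) as [H1 H2].
  exact (iso_alg_hom S (A:=tens S (free S X) (free S Y)) (B:=free S (X × Y)) (xi S X Y) (xi_inv S X Y) (xi_hom _ S X Y) H2 H1).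
Qed.

Lemma tbR (A B : Alg S) :
  tb S A B ∘ pmap (idm (acar A)) (act B) = act (tens S A B) ∘ (fmap S (tb S A B) ∘ st S (acar A) (acar B)).
Proof. destruct (tb_bihom _ S A B) as [H _]. rewrite H. nrm. reflexivity. Qed.
Lemma tbL (A B : Alg S) :
  tb S A B ∘ pmap (act A) (idm (acar B)) = act (tens S A B) ∘ (fmap S (tb S A B) ∘ cst S (acar A) (acar B)).
Proof. destruct (tb_bihom _ S A B) as [_ H]. rewrite H. nrm. reflexivity. Qed.

Lemma hom_bihom (A B D : Alg S) (g : hom (acar (tens S A B)) (acar D)) :
  is_alg_hom (tens S A B) D g -> is_bihom S A B D (g ∘ tb S A B).
Proof.
  unfold is_alg_hom. intros H. split; nrm.
  - rw (tbR A B). rw H. rewrite fmap_comp. nrm. reflexivity.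
  - rw (tbL A B). rw H. rewrite fmap_comp. nrm. reflexivity.
Qed.

Lemma tens_ext (A B D : Alg S) (g h : hom (acar (tens S A B)) (acar D)) :
  is_alg_hom (tens S A B) D g -> is_alg_hom (tens S A B) D h ->
  g ∘ tb S A B = h ∘ tb S A B -> g = h.
Proof.
  intros Hg Hh E.
  destruct (tb_univ _ S A B D (g ∘ tb S A B) (hom_bihom A B D g Hg)) as [g0 [_ U]].
  rewrite (U g (conj Hg eq_refl)), (U h (conj Hh (eq_sym E))). reflexivity.
Qed.

Lemma tmap_hom {A A' B B' : Alg S} (f : hom (acar A) (acar A')) (g : hom (acar B) (acar B')) :
  is_alg_hom A A' f -> is_alg_hom B B' g -> is_alg_hom (tens S A B) (tens S A' B') (tmap S f g).
Proof. intros Hf Hg. exact (proj1 (tmap_spec _ S A A' B B' f g Hf Hg)). Qed.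
Lemma tmap_tb {A A' B B' : Alg S} (f : hom (acar A) (acar A')) (g : hom (acar B) (acar B')) :
  is_alg_hom A A' f -> is_alg_hom B B' g -> tmap S f g ∘ tb S A B = tb S A' B' ∘ pmap f g.
Proof. intros Hf Hg. exact (proj2 (tmap_spec _ S A A' B B' f g Hf Hg)). Qed.

Lemma tmap_comp {A A' A'' B B' B'' : Alg S} (f : hom (acar A) (acar A')) (g : hom (acar B) (acar B'))
  (f' : hom (acar A') (acar A'')) (g' : hom (acar B') (acar B'')) :
  is_alg_hom A A' f -> is_alg_hom B B' g -> is_alg_hom A' A'' f' -> is_alg_hom B' B'' g' ->
  tmap S f' g' ∘ tmap S f g = tmap S (f' ∘ f) (g' ∘ g).
Proof.
  intros Hf Hg Hf' Hg'. apply tens_ext.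
  - apply alg_hom_comp; apply tmap_hom; assumption.
  - apply tmap_hom; apply alg_hom_comp; assumption.
  - nrm. rw (tmap_tb f g Hf Hg). rw (tmap_tb f' g' Hf' Hg').
    rewrite (tmap_tb (f' ∘ f) (g' ∘ g)) by (apply alg_hom_comp; assumption).
    rewrite pmap_comp. reflexivity.
Qed.

Lemma tmap_id (A B : Alg S) : tmap S (idm (acar A)) (idm (acar B)) = idm _.
Proof.
  apply tens_ext.
  - apply tmap_hom; apply alg_hom_id.
  - apply alg_hom_id.
  - rewrite (tmap_tb _ _ (alg_hom_id S A) (alg_hom_id S B)). psimp.
    psimp. reflexivity.
Qed.

Lemma xi_inv_eta (X Y : C) : xi_inv S X Y ∘ eta S (X × Y) = tb S (free S X) (free S Y) ∘ pmap (eta S X) (eta S Y).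
Proof.
  destruct (xi_iso _ S X Y) as [_ H2].
  rewrite <- (dstL_eta S X Y). rewrite <- (xi_tb _ S X Y). nrm. rewrite (ch2 H2). nrm. reflexivity.
Qed.

End Set1.

Definition ext {C : CartCat} (S : Setting C) (A : Alg S) (b : hom (acar A) (T S (acar A)))
  {B : Alg S} (f : hom (acar A) (acar B)) : hom (acar A) (acar B) := act B ∘ (fmap S f ∘ b).

Section Co.
Context {C : CartCat} (S : Setting C).

Lemma tmap_tb_r {A A' B B' : Alg S} (f : hom (acar A) (acar A')) (g : hom (acar B) (acar B')) {W : C}
  (r : hom W (acar A × acar B)) :
  is_alg_hom A A' f -> is_alg_hom B B' g -> tmap S f g ∘ (tb S A B ∘ r) = tb S A' B' ∘ (pmap f g ∘ r).
Proof. intros Hf Hg. rewrite (ch2 (tmap_tb S f g Hf Hg)). nrm. reflexivity. Qed.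

Lemma ext_hom (A : Alg S) (b : hom (acar A) (T S (acar A))) {B : Alg S} (f : hom (acar A) (acar B)) :
  is_alg_hom A (free S (acar A)) b -> is_alg_hom A B (ext S A b f).
Proof.
  intros Hb. unfold ext. apply (alg_hom_comp S (A:=A) (B := free S (acar B)) (D:=B) (fmap S f ∘ b) (act B)).
  - apply (alg_hom_comp S (A:=A) (B := free S (acar A)) (D:=free S (acar B)) b (fmap S f)); [exact Hb | apply fmap_alg_hom].
  - apply act_alg_hom.
Qed.

Lemma ext_post (A : Alg S) (b : hom (acar A) (T S (acar A))) {B B' : Alg S} (h : hom (acar B) (acar B'))
  (f : hom (acar A) (acar B)) :
  is_alg_hom B B' h -> h ∘ ext S A b f = ext S A b (h ∘ f).
Proof. unfold ext, is_alg_hom. intros Hh. nrm. rw Hh. rewrite fmap_comp. nrm. reflexivity. Qed.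

Lemma ext_id (A : Alg S) (b : hom (acar A) (T S (acar A))) :
  act A ∘ b = idm _ -> ext S A b (B := A) (idm _) = idm _.
Proof. intros H. unfold ext. rewrite fmap_id, comp_idl. exact H. Qed.

Lemma d_ext (A : Alg S) (b : hom (acar A) (T S (acar A))) :
  d_b S A b = ext S A b (tb S A A ∘ diag (acar A)).
Proof.
  assert (K: tmap S (A := free S (acar A)) (B := free S (acar A)) (act A) (act A) ∘ xi_inv S (acar A) (acar A)
             = act (tens S A A) ∘ fmap S (tb S A A)).
  { apply (free_ext2 S (B := tens S A A)).
    - apply (alg_hom_comp S (A := free S (acar A × acar A)) (B := tens S (free S (acar A)) (free S (acar A))) (D := tens S A A)).
      + apply xi_inv_hom.
      + apply tmap_hom; apply act_alg_hom.
    - apply (alg_hom_comp S (A := free S (acar A × acar A)) (B := free S (acar (tens S A A))) (D := tens S A A)); [apply fmap_alg_hom | apply act_alg_hom].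
    - destruct (act_law _ A) as [HA _]. destruct (act_law _ (tens S A A)) as [HT _].
      nrm. rw (xi_inv_eta S (acar A) (acar A)).
      rewrite tmap_tb_r by apply act_alg_hom.
      rw (eta_nat _ S _ _ (tb S A A)). rw HT. psimp. repeat rw HA. psimp. reflexivity. }
  unfold d_b, ext. rewrite fmap_comp. nrm. rw K. reflexivity.
Qed.

Lemma u_ext (A : Alg S) (b : hom (acar A) (T S (acar A))) :
  u_b S A b = ext S A b (B := unitA S) (eta S one ∘ bang (acar A)).
Proof.
  unfold u_b, ext, unitA. simpl. rewrite fmap_comp. nrm. rw (mu_T_eta _ S one). reflexivity.
Qed.

End Co.

Section Co2.
Context {C : CartCat} (S : Setting C).

Lemma L_left (A : Alg S) (b : hom (acar A) (T S (acar A))) {B : Alg S} (f : hom (acar A) (acar B)) :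
  is_coalg S A b ->
  ext S A b (tb S B A ∘ (pmap (ext S A b f) (idm (acar A)) ∘ diag (acar A)))
  = ext S A b (tb S B A ∘ (pmap f (idm (acar A)) ∘ diag (acar A))).
Proof.
  intros [Hb1 [Hab Hsub]].
  destruct (act_law _ A) as [Hae _].
  assert (I1: tb S B A ∘ (pmap (ext S A b f) (idm (acar A)) ∘ diag (acar A)) =
     act (tens S B A) ∘ (fmap S (tb S B A) ∘ (fmap S (pmap f (idm (acar A))) ∘ (cst S (acar A) (acar A) ∘
       (pmap (idm (T S (acar A))) (act A) ∘ (diag (T S (acar A)) ∘ b)))))).
  { unfold ext.
    assert (E: pmap (act B ∘ (fmap S f ∘ b)) (idm (acar A)) ∘ diag (acar A) = pmap (act B) (idm (acar A)) ∘
       (pmap (fmap S f) (idm (acar A)) ∘ (pmap (idm _) (act A) ∘ (diag (T S (acar A)) ∘ b)))).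
    { psimp. repeat rw Hab. reflexivity. }
    rewrite E. rw (tbL S B A). rw (cst_nat S f (idm (acar A))). reflexivity. }
  assert (I2: cst S (acar A) (acar A) ∘ (pmap (idm (T S (acar A))) (act A) ∘ (diag (T S (acar A)) ∘ eta S (acar A))) = eta S ((acar A) × (acar A)) ∘ diag (acar A)).
  { assert (E: pmap (idm (T S (acar A))) (act A) ∘ (diag (T S (acar A)) ∘ eta S (acar A)) = pmap (eta S (acar A)) (idm (acar A)) ∘ diag (acar A)).
    { psimp. repeat rw Hae. reflexivity. }
    rewrite E. rw (cst_eta S (acar A) (acar A)). reflexivity. }
  rewrite I1. unfold ext. rewrite !fmap_comp. nrm.
  rw (eq_sym Hsub). rw (fmap_eq4 S I2). rewrite fmap_comp. nrm.
  destruct (act_law _ (tens S B A)) as [_ HT]. rw HT.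
  rw (eq_sym (mu_nat _ S _ _ (tb S B A))). rw (eq_sym (mu_nat _ S _ _ (pmap f (idm (acar A))))).
  rw (mu_T_eta _ S ((acar A) × (acar A))). reflexivity.
Qed.

Lemma L_right (A : Alg S) (b : hom (acar A) (T S (acar A))) {B : Alg S} (f : hom (acar A) (acar B)) :
  is_coalg S A b ->
  ext S A b (tb S A B ∘ (pmap (idm (acar A)) (ext S A b f) ∘ diag (acar A)))
  = ext S A b (tb S A B ∘ (pmap (idm (acar A)) f ∘ diag (acar A))).
Proof.
  intros [Hb1 [Hab Hsub]].
  destruct (act_law _ A) as [Hae _].
  assert (I1: tb S A B ∘ (pmap (idm (acar A)) (ext S A b f) ∘ diag (acar A)) =
     act (tens S A B) ∘ (fmap S (tb S A B) ∘ (fmap S (pmap (idm (acar A)) f) ∘ (st S (acar A) (acar A) ∘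
       (pmap (act A) (idm (T S (acar A))) ∘ (diag (T S (acar A)) ∘ b)))))).
  { unfold ext.
    assert (E: pmap (idm (acar A)) (act B ∘ (fmap S f ∘ b)) ∘ diag (acar A) = pmap (idm (acar A)) (act B) ∘
       (pmap (idm (acar A)) (fmap S f) ∘ (pmap (act A) (idm _) ∘ (diag (T S (acar A)) ∘ b)))).
    { psimp. repeat rw Hab. reflexivity. }
    rewrite E. rw (tbR S A B). rw (st_nat _ S (acar A) (acar A) (acar A) (acar B) (idm (acar A)) f). reflexivity. }
  assert (I2: st S (acar A) (acar A) ∘ (pmap (act A) (idm (T S (acar A))) ∘ (diag (T S (acar A)) ∘ eta S (acar A))) = eta S ((acar A) × (acar A)) ∘ diag (acar A)).
  { assert (E: pmap (act A) (idm (T S (acar A))) ∘ (diag (T S (acar A)) ∘ eta S (acar A)) = pmap (idm (acar A)) (eta S (acar A)) ∘ diag (acar A)).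
    { psimp. repeat rw Hae. reflexivity. }
    rewrite E. rw (st_eta _ S (acar A) (acar A)). reflexivity. }
  rewrite I1. unfold ext. rewrite !fmap_comp. nrm.
  rw (eq_sym Hsub). rw (fmap_eq4 S I2). rewrite fmap_comp. nrm.
  destruct (act_law _ (tens S A B)) as [_ HT]. rw HT.
  rw (eq_sym (mu_nat _ S _ _ (tb S A B))). rw (eq_sym (mu_nat _ S _ _ (pmap (idm (acar A)) f))).
  rw (mu_T_eta _ S ((acar A) × (acar A))). reflexivity.
Qed.

End Co2.

Section Co3.
Context {C : CartCat} (S : Setting C).

Lemma d_hom (A : Alg S) (b : hom (acar A) (T S (acar A))) :
  is_alg_hom A (free S (acar A)) b -> is_alg_hom A (tens S A A) (d_b S A b).
Proof. intros H. rewrite d_ext. apply ext_hom; exact H. Qed.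
Lemma u_hom (A : Alg S) (b : hom (acar A) (T S (acar A))) :
  is_alg_hom A (free S (acar A)) b -> is_alg_hom A (unitA S) (u_b S A b).
Proof. intros H. rewrite u_ext. apply ext_hom; exact H. Qed.

Lemma tc_hom (A1 A2 : Alg S) (b1 : hom (acar A1) (T S (acar A1))) (b2 : hom (acar A2) (T S (acar A2))) :
  is_alg_hom A1 (free S (acar A1)) b1 -> is_alg_hom A2 (free S (acar A2)) b2 ->
  is_alg_hom (tens S A1 A2) (free S (acar (tens S A1 A2))) (tens_coalg S A1 A2 b1 b2).
Proof.
  intros H1 H2. unfold tens_coalg.
  apply (alg_hom_comp S (A := tens S A1 A2) (B := tens S (free S (acar A1)) (free S (acar A2))) (D := free S (acar (tens S A1 A2)))).
  - apply tmap_hom; assumption.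
  - apply (alg_hom_comp S (A := tens S (free S (acar A1)) (free S (acar A2))) (B := free S (acar A1 × acar A2)) (D := free S (acar (tens S A1 A2)))).
    + apply (xi_hom _ S).
    + apply fmap_alg_hom.
Qed.

Lemma tc_tb (A1 A2 : Alg S) (b1 : hom (acar A1) (T S (acar A1))) (b2 : hom (acar A2) (T S (acar A2))) :
  is_alg_hom A1 (free S (acar A1)) b1 -> is_alg_hom A2 (free S (acar A2)) b2 ->
  tens_coalg S A1 A2 b1 b2 ∘ tb S A1 A2 = fmap S (tb S A1 A2) ∘ (dstL S (acar A1) (acar A2) ∘ pmap b1 b2).
Proof.
  intros H1 H2. unfold tens_coalg. nrm.
  rw (tmap_tb S (A':=free S (acar A1)) (B':=free S (acar A2)) b1 b2 H1 H2). rw (xi_tb _ S (acar A1) (acar A2)). reflexivity.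
Qed.

Lemma d_coalg (A : Alg S) (b : hom (acar A) (T S (acar A))) :
  is_coalg S A b -> is_coalg_hom S A (tens S A A) b (tens_coalg S A A b b) (d_b S A b).
Proof.
  intros Hb. destruct Hb as [Hb1 [Hab Hsub]].
  assert (Hbh : is_alg_hom A (free S (acar A)) b) by exact Hb1.
  split; [apply d_hom; exact Hbh|].
  rewrite d_ext. rewrite (ext_post S A b (B':=free S (acar (tens S A A))) (tens_coalg S A A b b)) by (apply tc_hom; assumption).
  rewrite (ch2 (tc_tb A A b b Hbh Hbh)). nrm. rewrite pmap_diag.
  unfold ext. simpl. rewrite !fmap_comp. nrm.
  rewrite <- Hsub.
  assert (E: dstL S (acar A) (acar A) ∘ (diag (T S (acar A)) ∘ eta S (acar A)) = eta S _ ∘ diag (acar A)).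
  { rewrite <- pmap_diag. nrm. rw (dstL_eta S (acar A) (acar A)). reflexivity. }
  rw (fmap_eq3 S E). rewrite fmap_comp. nrm.
  rw (fmap_eq2 S (eta_nat _ S _ _ (tb S A A))). rewrite fmap_comp. nrm.
  rw (mu_T_eta _ S (acar (tens S A A))).
  rw (fmap_eq2 S (eta_nat _ S _ _ (diag (acar A)))). rewrite fmap_comp. nrm.
  rw (fmap_eq2 S (eta_nat _ S _ _ (tb S A A))). rewrite fmap_comp. nrm.
  destruct (act_law _ (tens S A A)) as [HT _].
  rw (fmap_eq2 S HT). rewrite fmap_id. nrm. reflexivity.
Qed.

End Co3.

Section Co4.
Context {C : CartCat} (S : Setting C).

Lemma u_coalg (A : Alg S) (b : hom (acar A) (T S (acar A))) :
  is_coalg S A b -> is_coalg_hom S A (unitA S) b (free_coalg S one) (u_b S A b).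
Proof.
  intros [Hb1 [Hab Hsub]]. split; [apply u_hom; exact Hb1|].
  unfold free_coalg, u_b. rewrite fmap_comp. nrm. rewrite <- Hsub.
  rw (fmap_eq2 S (eta_nat _ S _ _ (bang (acar A)))). rewrite fmap_comp. nrm. reflexivity.
Qed.

Lemma coassoc (A : Alg S) (b : hom (acar A) (T S (acar A))) :
  is_coalg S A b ->
  alpha S A A A
       ∘ tmap S (A := A) (A' := tens S A A) (B := A) (B' := A)
           (d_b S A b) (idm (acar A))
       ∘ d_b S A b
     = tmap S (A := A) (A' := A) (B := A) (B' := tens S A A)
           (idm (acar A)) (d_b S A b)
       ∘ d_b S A b.
Proof.
  intros Hb. pose proof Hb as [Hb1 _].
  assert (Hd : is_alg_hom A (tens S A A) (ext S A b (tb S A A ∘ diag (acar A))))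
    by (apply ext_hom; exact Hb1).
  rewrite !d_ext. nrm.
  rewrite (ext_post S A b (tmap S (A := A) (A' := tens S A A) (B := A) (B' := A)
           (ext S A b (tb S A A ∘ diag (acar A))) (idm (acar A))))
    by (apply tmap_hom; [exact Hd | apply alg_hom_id]).
  rewrite (ext_post S A b (tmap S (A := A) (A' := A) (B := A) (B' := tens S A A)
           (idm (acar A)) (ext S A b (tb S A A ∘ diag (acar A)))))
    by (apply tmap_hom; [apply alg_hom_id | exact Hd]).
  rewrite (ext_post S A b (alpha S A A A)) by apply (alpha_hom _ S).
  rewrite !tmap_tb_r by first [exact Hd | apply alg_hom_id].
  rewrite <- (ext_post S A b (alpha S A A A)) by apply (alpha_hom _ S).
  rewrite (L_left S A b), (L_right S A b) by exact Hb.
  rewrite (ext_post S A b (alpha S A A A)) by apply (alpha_hom _ S).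
  f_equal.
  assert (E: pmap (tb S A A ∘ diag (acar A)) (idm (acar A)) ∘ diag (acar A) =
     pmap (tb S A A) (idm (acar A)) ∘ (pmap (diag (acar A)) (idm (acar A)) ∘ diag (acar A)))
    by (psimp; reflexivity).
  assert (E2: pmap (idm (acar A)) (tb S A A ∘ diag (acar A)) ∘ diag (acar A) =
     pmap (idm (acar A)) (tb S A A) ∘ (pmap (idm (acar A)) (diag (acar A)) ∘ diag (acar A)))
    by (psimp; reflexivity).
  rewrite E, E2.
  pose proof (alpha_tb _ S A A A) as AT. nrm.
  repeat rewrite <- comp_assoc in AT. rw AT. rewrite assoc_diag. reflexivity.
Qed.


Lemma counitL (A : Alg S) (b : hom (acar A) (T S (acar A))) :
  is_coalg S A b ->
     lam S A
       ∘ tmap S (A := A) (A' := unitA S) (B := A) (B' := A)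
           (u_b S A b) (idm (acar A))
       ∘ d_b S A b = idm (acar A).
Proof.
  intros Hb. pose proof Hb as [Hb1 [Hab _]].
  assert (Hu : is_alg_hom A (unitA S) (ext S A b (B:=unitA S) (eta S one ∘ bang (acar A))))
    by (apply ext_hom; exact Hb1).
  rewrite d_ext, u_ext. nrm.
  rewrite (ext_post S A b (tmap S (A := A) (A' := unitA S) (B := A) (B' := A)
           (ext S A b (B:=unitA S) (eta S one ∘ bang (acar A))) (idm (acar A))))
    by (apply tmap_hom; [exact Hu | apply alg_hom_id]).
  rewrite tmap_tb_r by first [exact Hu | apply alg_hom_id].
  rewrite (L_left S A b) by exact Hb.
  rewrite (ext_post S A b (lam S A)) by apply (lam_hom _ S).
  transitivity (ext S A b (B:=A) (idm (acar A))); [f_equal | exact (ext_id S A b Hab)].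
  assert (E: pmap (eta S one ∘ bang (acar A)) (idm (acar A)) ∘ diag (acar A) =
     pmap (eta S one) (idm (acar A)) ∘ (pmap (bang (acar A)) (idm (acar A)) ∘ diag (acar A)))
    by (psimp; reflexivity).
  cbn [unitA free acar act]. rewrite E.
  pose proof (lam_tb _ S A) as LT. repeat rewrite <- comp_assoc in LT. rw LT.
  rw (cst_eta S one (acar A)). rw (eta_nat _ S _ _ (snd one (acar A))).
  destruct (act_law _ A) as [Hae _]. rw Hae. psimp. reflexivity.
Qed.

Lemma counitR (A : Alg S) (b : hom (acar A) (T S (acar A))) :
  is_coalg S A b ->
     rho S A
       ∘ tmap S (A := A) (A' := A) (B := A) (B' := unitA S)
           (idm (acar A)) (u_b S A b)
       ∘ d_b S A b = idm (acar A).
Proof.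
  intros Hb. pose proof Hb as [Hb1 [Hab _]].
  assert (Hu : is_alg_hom A (unitA S) (ext S A b (B:=unitA S) (eta S one ∘ bang (acar A))))
    by (apply ext_hom; exact Hb1).
  rewrite d_ext, u_ext. nrm.
  rewrite (ext_post S A b (tmap S (A := A) (A' := A) (B := A) (B' := unitA S)
           (idm (acar A)) (ext S A b (B:=unitA S) (eta S one ∘ bang (acar A)))))
    by (apply tmap_hom; [apply alg_hom_id | exact Hu]).
  rewrite tmap_tb_r by first [exact Hu | apply alg_hom_id].
  rewrite (L_right S A b) by exact Hb.
  rewrite (ext_post S A b (rho S A)) by apply (rho_hom _ S).
  transitivity (ext S A b (B:=A) (idm (acar A))); [f_equal | exact (ext_id S A b Hab)].
  assert (E: pmap (idm (acar A)) (eta S one ∘ bang (acar A)) ∘ diag (acar A) =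
     pmap (idm (acar A)) (eta S one) ∘ (pmap (idm (acar A)) (bang (acar A)) ∘ diag (acar A)))
    by (psimp; reflexivity).
  cbn [unitA free acar act]. rewrite E.
  pose proof (rho_tb _ S A) as LT. repeat rewrite <- comp_assoc in LT. rw LT.
  rw (st_eta _ S (acar A) one). rw (eta_nat _ S _ _ (fst (acar A) one)).
  destruct (act_law _ A) as [Hae _]. rw Hae. psimp. reflexivity.
Qed.

End Co4.

Section Pr.
Context {C : CartCat} (S : Setting C).

Lemma coalg_hom_comp {A B D : Alg S} {bA : hom (acar A) (T S (acar A))} {bB : hom (acar B) (T S (acar B))}
  {bD : hom (acar D) (T S (acar D))} (f : hom (acar A) (acar B)) (g : hom (acar B) (acar D)) :
  is_coalg_hom S A B bA bB f -> is_coalg_hom S B D bB bD g -> is_coalg_hom S A D bA bD (g ∘ f).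
Proof.
  intros [Hf1 Hf2] [Hg1 Hg2]. split; [apply alg_hom_comp; assumption|].
  nrm. rw Hg2. rw Hf2. rewrite fmap_comp. nrm. reflexivity.
Qed.

Lemma dsub (A1 A2 : Alg S) (b1 : hom (acar A1) (T S (acar A1))) (b2 : hom (acar A2) (T S (acar A2))) :
  is_coalg S A1 b1 -> is_coalg S A2 b2 ->
  fmap S (pmap b1 b2) ∘ (dstL S (acar A1) (acar A2) ∘ pmap b1 b2)
  = fmap S (pmap (eta S (acar A1)) (eta S (acar A2))) ∘ (dstL S (acar A1) (acar A2) ∘ pmap b1 b2).
Proof.
  intros [_ [_ H1]] [_ [_ H2]].
  rw (eq_sym (dstL_nat S b1 b2)). rewrite pmap_comp, <- H1, <- H2, <- pmap_comp.
  rw (dstL_nat S (eta S (acar A1)) (eta S (acar A2))). reflexivity.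
Qed.

Lemma tmap_coalg {A1 B1 A2 B2 : Alg S} (b1 : hom (acar A1) (T S (acar A1))) (c1 : hom (acar B1) (T S (acar B1)))
  (b2 : hom (acar A2) (T S (acar A2))) (c2 : hom (acar B2) (T S (acar B2)))
  (g1 : hom (acar A1) (acar B1)) (g2 : hom (acar A2) (acar B2)) :
  is_alg_hom A1 (free S (acar A1)) b1 -> is_alg_hom A2 (free S (acar A2)) b2 ->
  is_alg_hom B1 (free S (acar B1)) c1 -> is_alg_hom B2 (free S (acar B2)) c2 ->
  is_coalg_hom S A1 B1 b1 c1 g1 -> is_coalg_hom S A2 B2 b2 c2 g2 ->
  is_coalg_hom S (tens S A1 A2) (tens S B1 B2) (tens_coalg S A1 A2 b1 b2) (tens_coalg S B1 B2 c1 c2) (tmap S g1 g2).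
Proof.
  intros Hb1 Hb2 Hc1 Hc2 [Hg1 Eg1] [Hg2 Eg2].
  split; [apply tmap_hom; assumption|].
  apply (tens_ext S A1 A2 (free S (acar (tens S B1 B2)))).
  - apply (alg_hom_comp S (A := tens S A1 A2) (B := tens S B1 B2) (D := free S (acar (tens S B1 B2)))).
    + apply tmap_hom; assumption.
    + apply tc_hom; assumption.
  - apply (alg_hom_comp S (A := tens S A1 A2) (B := free S (acar (tens S A1 A2))) (D := free S (acar (tens S B1 B2)))).
    + apply tc_hom; assumption.
    + apply fmap_alg_hom.
  - nrm. rw (tmap_tb S g1 g2 Hg1 Hg2). rw (tc_tb S B1 B2 c1 c2 Hc1 Hc2). rw (tc_tb S A1 A2 b1 b2 Hb1 Hb2).
    rewrite pmap_comp, Eg1, Eg2, <- pmap_comp. rw (dstL_nat S g1 g2).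
    rw (fmap_eq2 S (tmap_tb S g1 g2 Hg1 Hg2)). rewrite fmap_comp. nrm. reflexivity.
Qed.

Lemma tc_is_coalg (A1 A2 : Alg S) (b1 : hom (acar A1) (T S (acar A1))) (b2 : hom (acar A2) (T S (acar A2))) :
  is_coalg S A1 b1 -> is_coalg S A2 b2 -> is_coalg S (tens S A1 A2) (tens_coalg S A1 A2 b1 b2).
Proof.
  intros HB1 HB2. pose proof HB1 as [Hb1 [Hab1 Hs1]]. pose proof HB2 as [Hb2 [Hab2 Hs2]].
  assert (Ht := tc_hom S A1 A2 b1 b2 Hb1 Hb2).
  split; [exact Ht|]. split.
  - apply (tens_ext S A1 A2 (tens S A1 A2)).
    + apply (alg_hom_comp S (A := tens S A1 A2) (B := free S (acar (tens S A1 A2))) (D := tens S A1 A2)); [exact Ht | apply act_alg_hom].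
    + apply alg_hom_id.
    + nrm. rw (tc_tb S A1 A2 b1 b2 Hb1 Hb2).
      rw (bihom_ext S A1 A2 (tens S A1 A2) (tb S A1 A2) (tb_bihom _ S A1 A2)).
      rewrite pmap_comp, Hab1, Hab2. psimp. reflexivity.
  - apply (tens_ext S A1 A2 (free S (T S (acar (tens S A1 A2))))).
    + apply (alg_hom_comp S (A := tens S A1 A2) (B := free S (acar (tens S A1 A2))) (D := free S (T S (acar (tens S A1 A2))))); [exact Ht | apply fmap_alg_hom].
    + apply (alg_hom_comp S (A := tens S A1 A2) (B := free S (acar (tens S A1 A2))) (D := free S (T S (acar (tens S A1 A2))))); [exact Ht | apply fmap_alg_hom].
    + nrm. rw (tc_tb S A1 A2 b1 b2 Hb1 Hb2).
      rw (fmap_eq2 S (tc_tb S A1 A2 b1 b2 Hb1 Hb2)). rewrite !fmap_comp. nrm.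
      rw (dsub A1 A2 b1 b2 HB1 HB2). rw (fmap_eq2 S (dstL_eta S (acar A1) (acar A2))).
      rw (fmap_eq2 S (eta_nat _ S _ _ (tb S A1 A2))). rewrite fmap_comp. nrm. reflexivity.
Qed.

Lemma d_nat {Z B : Alg S} (c : hom (acar Z) (T S (acar Z))) (b : hom (acar B) (T S (acar B)))
  (h : hom (acar Z) (acar B)) :
  is_coalg_hom S Z B c b h -> d_b S B b ∘ h = tmap S h h ∘ d_b S Z c.
Proof.
  intros [Hh1 Hh2]. rewrite !d_ext.
  rewrite (ext_post S Z c (tmap S h h)) by (apply tmap_hom; assumption).
  rewrite tmap_tb_r by assumption. rewrite pmap_diag.
  unfold ext. nrm. rw Hh2. rewrite !fmap_comp. nrm. reflexivity.
Qed.

Lemma u_nat {Z B : Alg S} (c : hom (acar Z) (T S (acar Z))) (b : hom (acar B) (T S (acar B)))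
  (h : hom (acar Z) (acar B)) :
  is_coalg_hom S Z B c b h -> u_b S B b ∘ h = u_b S Z c.
Proof.
  intros [Hh1 Hh2]. unfold u_b. nrm. rw Hh2. rw (fmap_eq2 S (bang_comp h)). reflexivity.
Qed.

End Pr.

Definition p1d {C : CartCat} (S : Setting C) (A1 A2 : Alg S) (b2 : hom (acar A2) (T S (acar A2))) :=
  rho S A1 ∘ tmap S (A := A1) (A' := A1) (B := A2) (B' := unitA S) (idm (acar A1)) (u_b S A2 b2).
Definition p2d {C : CartCat} (S : Setting C) (A1 A2 : Alg S) (b1 : hom (acar A1) (T S (acar A1))) :=
  lam S A2 ∘ tmap S (A := A1) (A' := unitA S) (B := A2) (B' := A2) (u_b S A1 b1) (idm (acar A2)).

Section Pr2.
Context {C : CartCat} (S : Setting C).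
Context (A1 A2 : Alg S) (b1 : hom (acar A1) (T S (acar A1))) (b2 : hom (acar A2) (T S (acar A2))).

Lemma p1_hom : is_alg_hom A2 (free S (acar A2)) b2 -> is_alg_hom (tens S A1 A2) A1 (p1d S A1 A2 b2).
Proof.
  intros H. unfold p1d.
  apply (alg_hom_comp S (A := tens S A1 A2) (B := tens S A1 (unitA S)) (D := A1)).
  - apply tmap_hom; [apply alg_hom_id | apply u_hom; exact H].
  - apply (rho_hom _ S).
Qed.
Lemma p2_hom : is_alg_hom A1 (free S (acar A1)) b1 -> is_alg_hom (tens S A1 A2) A2 (p2d S A1 A2 b1).
Proof.
  intros H. unfold p2d.
  apply (alg_hom_comp S (A := tens S A1 A2) (B := tens S (unitA S) A2) (D := A2)).
  - apply tmap_hom; [apply u_hom; exact H | apply alg_hom_id].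
  - apply (lam_hom _ S).
Qed.

Lemma p1_tb : is_alg_hom A2 (free S (acar A2)) b2 ->
  p1d S A1 A2 b2 ∘ tb S A1 A2 = act A1 ∘ (fmap S (fst (acar A1) one) ∘ (st S (acar A1) one ∘ pmap (idm (acar A1)) (u_b S A2 b2))).
Proof.
  intros H. unfold p1d. nrm.
  pose proof (tmap_tb S (A':=A1) (B':=unitA S) (idm (acar A1)) (u_b S A2 b2) (alg_hom_id S A1) (u_hom S A2 b2 H)) as HH. unfold unitA in *. rewrite HH.
  unfold unitA. pose proof (rho_tb _ S A1) as R. repeat rewrite <- comp_assoc in R. rw R. reflexivity.
Qed.

Lemma p2_tb : is_alg_hom A1 (free S (acar A1)) b1 ->
  p2d S A1 A2 b1 ∘ tb S A1 A2 = act A2 ∘ (fmap S (snd one (acar A2)) ∘ (cst S one (acar A2) ∘ pmap (u_b S A1 b1) (idm (acar A2)))).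
Proof.
  intros H. unfold p2d. nrm.
  pose proof (tmap_tb S (A':=unitA S) (B':=A2) (u_b S A1 b1) (idm (acar A2)) (u_hom S A1 b1 H) (alg_hom_id S A2)) as HH.
  unfold unitA in *. rewrite HH. pose proof (lam_tb _ S A2) as R. repeat rewrite <- comp_assoc in R. rw R. reflexivity.
Qed.

Definition P1' := act A1 ∘ (fmap S (fst (acar A1) one) ∘ (st S (acar A1) one ∘ pmap (act A1) (fmap S (bang (acar A2))))).
Definition P2' := act A2 ∘ (fmap S (snd one (acar A2)) ∘ (cst S one (acar A2) ∘ pmap (fmap S (bang (acar A1))) (act A2))).

Lemma p1_tb2 : is_coalg S A1 b1 -> is_coalg S A2 b2 ->
  p1d S A1 A2 b2 ∘ tb S A1 A2 = P1' ∘ pmap b1 b2.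
Proof.
  intros [_ [Hab1 _]] [Hb2 _]. rewrite (p1_tb Hb2). unfold P1', u_b. nrm. psimp. repeat rw Hab1. reflexivity.
Qed.
Lemma p2_tb2 : is_coalg S A1 b1 -> is_coalg S A2 b2 ->
  p2d S A1 A2 b1 ∘ tb S A1 A2 = P2' ∘ pmap b1 b2.
Proof.
  intros [Hb1 _] [_ [Hab2 _]]. rewrite (p2_tb Hb1). unfold P2', u_b. nrm. psimp. repeat rw Hab2. reflexivity.
Qed.

Lemma p1_eta : P1' ∘ pmap (eta S (acar A1)) (eta S (acar A2)) = fst (acar A1) (acar A2).
Proof.
  unfold P1'. nrm. destruct (act_law _ A1) as [Hae _].
  assert (E: pmap (act A1) (fmap S (bang (acar A2))) ∘ pmap (eta S (acar A1)) (eta S (acar A2)) =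
             pmap (idm (acar A1)) (eta S one) ∘ pmap (idm (acar A1)) (bang (acar A2))).
  { psimp. repeat rw Hae. rw (eta_nat _ S _ _ (bang (acar A2))). psimp. reflexivity. }
  rewrite E. rw (st_eta _ S (acar A1) one). rw (eta_nat _ S _ _ (fst (acar A1) one)). rw Hae.
  psimp. reflexivity.
Qed.
Lemma p2_eta : P2' ∘ pmap (eta S (acar A1)) (eta S (acar A2)) = snd (acar A1) (acar A2).
Proof.
  unfold P2'. nrm. destruct (act_law _ A2) as [Hae _].
  assert (E: pmap (fmap S (bang (acar A1))) (act A2) ∘ pmap (eta S (acar A1)) (eta S (acar A2)) =
             pmap (eta S one) (idm (acar A2)) ∘ pmap (bang (acar A1)) (idm (acar A2))).
  { psimp. repeat rw Hae. rw (eta_nat _ S _ _ (bang (acar A1))). psimp. reflexivity. }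
  rewrite E. rw (cst_eta S one (acar A2)). rw (eta_nat _ S _ _ (snd one (acar A2))). rw Hae.
  psimp. reflexivity.
Qed.

End Pr2.

Section Pr3.
Context {C : CartCat} (S : Setting C).

Lemma p1_coalg (A1 A2 : Alg S) (b1 : hom (acar A1) (T S (acar A1))) (b2 : hom (acar A2) (T S (acar A2))) :
  is_coalg S A1 b1 -> is_coalg S A2 b2 ->
  is_coalg_hom S (tens S A1 A2) A1 (tens_coalg S A1 A2 b1 b2) b1 (p1d S A1 A2 b2).
Proof.
  intros HB1 HB2. pose proof HB1 as [Hb1 [Hab1 Hs1]]. pose proof HB2 as [Hb2 [Hab2 Hs2]].
  split; [apply p1_hom; exact Hb2|].
  apply (tens_ext S A1 A2 (free S (acar A1))).
  - apply (alg_hom_comp S (A := tens S A1 A2) (B := A1) (D := free S (acar A1))); [apply p1_hom; exact Hb2 | exact Hb1].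
  - apply (alg_hom_comp S (A := tens S A1 A2) (B := free S (acar (tens S A1 A2))) (D := free S (acar A1))).
    + apply tc_hom; assumption.
    + apply fmap_alg_hom.
  - nrm. rewrite (p1_tb S A1 A2 b2 Hb2). rw Hb1.
    assert (E1: b1 ∘ fst (acar A1) one = fst (T S (acar A1)) one ∘ pmap b1 (idm one)) by (psimp; reflexivity).
    rw (fmap_eq2 S E1). rewrite fmap_comp. nrm.
    rw (eq_sym (st_natl S (B:=one) b1)). rewrite pmap_comp. nrm.
    rw (tc_tb S A1 A2 b1 b2 Hb1 Hb2). rw (fmap_eq2 S (p1_tb2 S A1 A2 b1 b2 HB1 HB2)).
    rewrite (fmap_comp _ S _ _ _ (pmap b1 b2) (P1' S A1 A2)). nrm.
    rw (dsub S A1 A2 b1 b2 HB1 HB2). rw (fmap_eq2 S (p1_eta S A1 A2)).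
    rw (Tfst_dstL S (acar A1) (acar A2)).
    unfold u_b.
    assert (E2: pmap b1 (fmap S (bang (acar A2)) ∘ b2) = pmap (idm _) (fmap S (bang (acar A2))) ∘ pmap b1 b2)
      by (psimp; reflexivity).
    rewrite E2. rw (st_nat _ S _ _ _ _ (idm (T S (acar A1))) (bang (acar A2))).
    assert (E3: fst (T S (acar A1)) one ∘ pmap (idm (T S (acar A1))) (bang (acar A2)) = fst _ _) by (psimp; reflexivity).
    rw (fmap_eq2 S E3). reflexivity.
Qed.


Lemma p2_coalg (A1 A2 : Alg S) (b1 : hom (acar A1) (T S (acar A1))) (b2 : hom (acar A2) (T S (acar A2))) :
  is_coalg S A1 b1 -> is_coalg S A2 b2 ->
  is_coalg_hom S (tens S A1 A2) A2 (tens_coalg S A1 A2 b1 b2) b2 (p2d S A1 A2 b1).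
Proof.
  intros HB1 HB2. pose proof HB1 as [Hb1 [Hab1 Hs1]]. pose proof HB2 as [Hb2 [Hab2 Hs2]].
  split; [apply p2_hom; exact Hb1|].
  apply (tens_ext S A1 A2 (free S (acar A2))).
  - apply (alg_hom_comp S (A := tens S A1 A2) (B := A2) (D := free S (acar A2))); [apply p2_hom; exact Hb1 | exact Hb2].
  - apply (alg_hom_comp S (A := tens S A1 A2) (B := free S (acar (tens S A1 A2))) (D := free S (acar A2))).
    + apply tc_hom; assumption.
    + apply fmap_alg_hom.
  - nrm. rewrite (p2_tb S A1 A2 b1 Hb1). rw Hb2.
    assert (E1: b2 ∘ snd one (acar A2) = snd one (T S (acar A2)) ∘ pmap (idm one) b2) by (psimp; reflexivity).
    rw (fmap_eq2 S E1). rewrite fmap_comp. nrm.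
    pose proof (cst_nat S (idm one) b2) as CN. rewrite fmap_id in CN.
    rw (eq_sym CN). rewrite pmap_comp. nrm.
    rw (tc_tb S A1 A2 b1 b2 Hb1 Hb2). rw (fmap_eq2 S (p2_tb2 S A1 A2 b1 b2 HB1 HB2)).
    rewrite (fmap_comp _ S _ _ _ (pmap b1 b2) (P2' S A1 A2)). nrm.
    rw (dsub S A1 A2 b1 b2 HB1 HB2). rw (fmap_eq2 S (p2_eta S A1 A2)).
    rewrite (M_comm _ S (acar A1) (acar A2)).
    rw (Tsnd_dstR S (acar A1) (acar A2)).
    unfold u_b.
    assert (E2: pmap (fmap S (bang (acar A1)) ∘ b1) b2 = pmap (fmap S (bang (acar A1))) (idm _) ∘ pmap b1 b2)
      by (psimp; reflexivity).
    rewrite E2. rw (cst_nat S (bang (acar A1)) (idm (T S (acar A2)))).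
    assert (E3: snd one (T S (acar A2)) ∘ pmap (bang (acar A1)) (idm (T S (acar A2))) = snd _ _) by (psimp; reflexivity).
    rw (fmap_eq2 S E3). reflexivity.
Qed.

Lemma key_id (A1 A2 : Alg S) (b1 : hom (acar A1) (T S (acar A1))) (b2 : hom (acar A2) (T S (acar A2))) :
  is_coalg S A1 b1 -> is_coalg S A2 b2 ->
  tmap S (A:=tens S A1 A2) (A':=A1) (B:=tens S A1 A2) (B':=A2) (p1d S A1 A2 b2) (p2d S A1 A2 b1)
    ∘ d_b S (tens S A1 A2) (tens_coalg S A1 A2 b1 b2) = idm _.
Proof.
  intros HB1 HB2. pose proof HB1 as [Hb1 [Hab1 Hs1]]. pose proof HB2 as [Hb2 [Hab2 Hs2]].
  assert (Ht := tc_hom S A1 A2 b1 b2 Hb1 Hb2).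
  assert (Hp1 := p1_hom S A1 A2 b2 Hb2). assert (Hp2 := p2_hom S A1 A2 b1 Hb1).
  apply (tens_ext S A1 A2 (tens S A1 A2)).
  - apply (alg_hom_comp S (A := tens S A1 A2) (B := tens S (tens S A1 A2) (tens S A1 A2)) (D := tens S A1 A2)).
    + apply d_hom; exact Ht.
    + apply tmap_hom; assumption.
  - apply alg_hom_id.
  - rewrite d_ext. unfold ext. nrm.
    rw (tc_tb S A1 A2 b1 b2 Hb1 Hb2).
    pose proof (tmap_hom S _ _ Hp1 Hp2) as TH. unfold is_alg_hom in TH. rw TH.
    assert (R: tmap S (A:=tens S A1 A2) (A':=A1) (B:=tens S A1 A2) (B':=A2) (p1d S A1 A2 b2) (p2d S A1 A2 b1)
        ∘ (tb S (tens S A1 A2) (tens S A1 A2) ∘ (diag _ ∘ tb S A1 A2))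
        = tb S A1 A2 ∘ (pair (P1' S A1 A2) (P2' S A1 A2) ∘ pmap b1 b2)).
    { rewrite tmap_tb_r by assumption.
      assert (E: pmap (p1d S A1 A2 b2) (p2d S A1 A2 b1) ∘ (diag _ ∘ tb S A1 A2)
                 = pair (p1d S A1 A2 b2 ∘ tb S A1 A2) (p2d S A1 A2 b1 ∘ tb S A1 A2)) by (psimp; reflexivity).
      rewrite E, (p1_tb2 S A1 A2 b1 b2 HB1 HB2), (p2_tb2 S A1 A2 b1 b2 HB1 HB2), pair_comp. reflexivity. }
    transitivity (act (tens S A1 A2) ∘ (fmap S (tb S A1 A2 ∘ (pair (P1' S A1 A2) (P2' S A1 A2) ∘ pmap b1 b2))
                    ∘ (dstL S (acar A1) (acar A2) ∘ pmap b1 b2))).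
    { rewrite <- R. rewrite !fmap_comp. nrm. reflexivity. }
    rewrite !fmap_comp. nrm.
    rw (dsub S A1 A2 b1 b2 HB1 HB2).
    assert (Q: tb S A1 A2 ∘ (pair (P1' S A1 A2) (P2' S A1 A2) ∘ pmap (eta S (acar A1)) (eta S (acar A2))) = tb S A1 A2).
    { rewrite pair_comp, p1_eta, p2_eta. psimp. reflexivity. }
    rw (fmap_eq3 S Q).
    rw (bihom_ext S A1 A2 (tens S A1 A2) (tb S A1 A2) (tb_bihom _ S A1 A2)).
    rewrite pmap_comp, Hab1, Hab2. psimp. reflexivity.
Qed.

End Pr3.

Section Pr4.
Context {C : CartCat} (S : Setting C).

Lemma u_nat' {Z B : Alg S} (c : hom (acar Z) (T S (acar Z))) (b : hom (acar B) (T S (acar B)))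
  (h : hom (acar Z) (acar B)) :
  is_coalg_hom S Z B c b h -> @comp C (acar Z) (acar B) (acar (unitA S)) (u_b S B b) h = u_b S Z c.
Proof. intros H. exact (u_nat S c b h H). Qed.

Lemma tens_product (A1 A2 : Alg S) (b1 : hom (acar A1) (T S (acar A1))) (b2 : hom (acar A2) (T S (acar A2))) :
  is_coalg S A1 b1 -> is_coalg S A2 b2 ->
  coalg_product S A1 A2 (tens S A1 A2) b1 b2 (tens_coalg S A1 A2 b1 b2) (p1d S A1 A2 b2) (p2d S A1 A2 b1).
Proof.
  intros HB1 HB2. pose proof HB1 as [Hb1 [Hab1 Hs1]]. pose proof HB2 as [Hb2 [Hab2 Hs2]].
  split; [apply p1_coalg; assumption|]. split; [apply p2_coalg; assumption|].
  intros Z c Hc f1 f2 Hf1 Hf2.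
  pose proof Hc as [Hc1 [Habc Hsc]]. pose proof Hf1 as [Hf1a Hf1b]. pose proof Hf2 as [Hf2a Hf2b].
  exists (tmap S f1 f2 ∘ d_b S Z c). split.
  - split; [|split].
    + apply (coalg_hom_comp S (B := tens S Z Z) (bB := tens_coalg S Z Z c c)).
      * apply d_coalg; exact Hc.
      * apply tmap_coalg; assumption.
    + unfold p1d. nrm.
      rw (tmap_comp S (A'':=A1) (B'':=unitA S) f1 f2 (idm (acar A1)) (u_b S A2 b2) Hf1a Hf2a (alg_hom_id S A1) (u_hom S A2 b2 Hb2)).
      rewrite (u_nat' c b2 f2 Hf2).
      assert (E: tmap S (A:=Z) (A':=A1) (B:=Z) (B':=unitA S) f1 (u_b S Z c)
          = tmap S (A:=A1) (A':=A1) (B:=unitA S) (B':=unitA S) (idm _) (idm _)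
            ∘ (tmap S (A:=A1) (A':=A1) (B:=unitA S) (B':=unitA S) (idm _) (idm _) ∘ 
              (tmap S (A:=Z) (A':=A1) (B:=unitA S) (B':=unitA S) f1 (idm _)
            ∘ tmap S (A:=Z) (A':=Z) (B:=Z) (B':=unitA S) (idm _) (u_b S Z c)))).
      { rewrite !tmap_id. nrm. rewrite tmap_comp by first [apply alg_hom_id | apply u_hom; assumption | assumption].
        nrm. reflexivity. }
      rewrite E. rewrite !tmap_id. nrm. unfold unitA in *.
      rw (rho_nat _ S Z A1 f1 Hf1a).
      pose proof (counitR S Z c Hc) as CR. unfold unitA in CR. repeat rewrite <- comp_assoc in CR.
      rewrite CR. apply comp_idr.
    + unfold p2d. nrm.
      rw (tmap_comp S (A'':=unitA S) (B'':=A2) f1 f2 (u_b S A1 b1) (idm (acar A2)) Hf1a Hf2a (u_hom S A1 b1 Hb1) (alg_hom_id S A2)).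
      rewrite (u_nat' c b1 f1 Hf1).
      assert (E: tmap S (A:=Z) (A':=unitA S) (B:=Z) (B':=A2) (u_b S Z c) f2
          = tmap S (A:=unitA S) (A':=unitA S) (B:=A2) (B':=A2) (idm _) (idm _)
            ∘ (tmap S (A:=unitA S) (A':=unitA S) (B:=A2) (B':=A2) (idm _) (idm _) ∘ 
              (tmap S (A:=unitA S) (A':=unitA S) (B:=Z) (B':=A2) (idm _) f2
            ∘ tmap S (A:=Z) (A':=unitA S) (B:=Z) (B':=Z) (u_b S Z c) (idm _)))).
      { rewrite !tmap_id. nrm. rewrite tmap_comp by first [apply alg_hom_id | apply u_hom; assumption | assumption].
        nrm. reflexivity. }
      rewrite E. rewrite !tmap_id. nrm. unfold unitA in *.
      rw (lam_nat _ S Z A2 f2 Hf2a).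
      pose proof (counitL S Z c Hc) as CL. unfold unitA in CL. repeat rewrite <- comp_assoc in CL.
      rewrite CL. apply comp_idr.
  - intros h' [Hh' [E1 E2]].
    transitivity (tmap S (A:=tens S A1 A2) (A':=A1) (B:=tens S A1 A2) (B':=A2) (p1d S A1 A2 b2) (p2d S A1 A2 b1)
       ∘ (d_b S (tens S A1 A2) (tens_coalg S A1 A2 b1 b2) ∘ h')).
    { rewrite comp_assoc, key_id by assumption. rewrite comp_idl. reflexivity. }
    rewrite (d_nat S c (tens_coalg S A1 A2 b1 b2) h' Hh'). rewrite comp_assoc.
    destruct Hh' as [Hh'a _].
    rewrite tmap_comp by first [assumption | apply p1_hom; assumption | apply p2_hom; assumption].
    rewrite E1, E2. reflexivity.
Qed.

End Pr4.

Section Pr5.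
Context {C : CartCat} (S : Setting C).

Lemma free_coalg_is (Y : C) : is_coalg S (free S Y) (free_coalg S Y).
Proof.
  unfold is_coalg, free_coalg. simpl. split; [|split].
  - apply mu_nat.
  - apply mu_T_eta.
  - rewrite <- !fmap_comp, (eta_nat _ S _ _ (eta S Y)). reflexivity.
Qed.

Lemma fmap_coalg_hom (Y Y' : C) (f : hom Y Y') :
  is_coalg_hom S (free S Y) (free S Y') (free_coalg S Y) (free_coalg S Y') (fmap S f).
Proof.
  split; [apply fmap_alg_hom|]. unfold free_coalg. simpl.
  rewrite <- !fmap_comp, (eta_nat _ S _ _ f). reflexivity.
Qed.

Lemma terminal : coalg_terminal S (unitA S) (free_coalg S one).
Proof.
  intros Z c Hc. exists (u_b S Z c). split; [apply u_coalg; exact Hc|].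
  intros h' [Hh1 Hh2]. unfold free_coalg, unitA in *. simpl in *.
  transitivity (fmap S (bang (T S one)) ∘ (fmap S (eta S one) ∘ h')).
  - assert (E: bang (T S one) ∘ eta S one = idm one) by (rewrite bang_comp; symmetry; apply bang_uniq).
    rw (fmap_eq2 S E). rewrite fmap_id. nrm. reflexivity.
  - rewrite Hh2. nrm. rw (fmap_eq2 S (bang_comp h')). unfold u_b. reflexivity.
Qed.

Lemma coalg_iso_inv {P P' : Alg S} {bP : hom (acar P) (T S (acar P))} {bP' : hom (acar P') (T S (acar P'))}
  (phi : hom (acar P) (acar P')) (psi : hom (acar P') (acar P)) :
  is_coalg_hom S P P' bP bP' phi -> psi ∘ phi = idm _ -> phi ∘ psi = idm _ ->
  is_coalg_hom S P' P bP' bP psi.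
Proof.
  intros [Hphi1 Hphi2] I1 I2. split; [exact (iso_alg_hom S phi psi Hphi1 I1 I2)|].
  transitivity (fmap S psi ∘ (fmap S phi ∘ (bP ∘ psi))).
  - rw (fmap_eq2 S I1). rewrite fmap_id. nrm. reflexivity.
  - rw (eq_sym Hphi2). rw I2. reflexivity.
Qed.

Lemma transport {A1 A2 P P' : Alg S} {b1 : hom (acar A1) (T S (acar A1))} {b2 : hom (acar A2) (T S (acar A2))}
  {bP : hom (acar P) (T S (acar P))} {bP' : hom (acar P') (T S (acar P'))}
  (q1 : hom (acar P) (acar A1)) (q2 : hom (acar P) (acar A2))
  (q1' : hom (acar P') (acar A1)) (q2' : hom (acar P') (acar A2))
  (phi : hom (acar P) (acar P')) (psi : hom (acar P') (acar P)) :
  coalg_product S A1 A2 P b1 b2 bP q1 q2 ->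
  is_coalg_hom S P P' bP bP' phi -> is_coalg_hom S P' P bP' bP psi ->
  psi ∘ phi = idm _ -> phi ∘ psi = idm _ ->
  q1' ∘ phi = q1 -> q2' ∘ phi = q2 ->
  coalg_product S A1 A2 P' b1 b2 bP' q1' q2'.
Proof.
  intros [Hq1 [Hq2 U]] Hphi Hpsi I1 I2 E1 E2.
  assert (F1: q1' = q1 ∘ psi) by (rewrite <- E1, <- comp_assoc, I2, comp_idr; reflexivity).
  assert (F2: q2' = q2 ∘ psi) by (rewrite <- E2, <- comp_assoc, I2, comp_idr; reflexivity).
  split; [rewrite F1; exact (coalg_hom_comp S psi q1 Hpsi Hq1)|].
  split; [rewrite F2; exact (coalg_hom_comp S psi q2 Hpsi Hq2)|].
  intros Z c Hc f1 f2 Hf1 Hf2. destruct (U Z c Hc f1 f2 Hf1 Hf2) as [h0 [[Hh0 [G1 G2]] U0]].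
  exists (phi ∘ h0). split.
  - split; [exact (coalg_hom_comp S h0 phi Hh0 Hphi)|].
    split; rewrite comp_assoc; [rewrite E1 | rewrite E2]; assumption.
  - intros h' [Hh' [K1 K2]].
    assert (H: psi ∘ h' = h0).
    { apply U0. split; [exact (coalg_hom_comp S h' psi Hh' Hpsi)|].
      split; rewrite comp_assoc; [rewrite <- F1 | rewrite <- F2]; assumption. }
    rewrite <- H, comp_assoc, I2, comp_idl. reflexivity.
Qed.

End Pr5.

Section Pr6.
Context {C : CartCat} (S : Setting C).

Lemma xi_coalg (Y1 Y2 : C) :
  is_coalg_hom S (tens S (free S Y1) (free S Y2)) (free S (Y1 × Y2))
    (tens_coalg S (free S Y1) (free S Y2) (free_coalg S Y1) (free_coalg S Y2)) (free_coalg S (Y1 × Y2)) (xi S Y1 Y2).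
Proof.
  split; [apply (xi_hom _ S)|].
  unfold free_coalg, tens_coalg. nrm.
  change (acar (free S Y1)) with (T S Y1) in *. change (acar (free S Y2)) with (T S Y2) in *.
  change (acar (free S (Y1 × Y2))) with (T S (Y1 × Y2)) in *.
  rw (fmap_eq2 S (xi_tb _ S Y1 Y2)).
  rw (xi_nat _ S Y1 (T S Y1) Y2 (T S Y2) (eta S Y1) (eta S Y2)).
  rw (fmap_eq2 S (dstL_eta S Y1 Y2)). reflexivity.
Qed.


Lemma free_product (Y1 Y2 : C) :
  coalg_product S (free S Y1) (free S Y2) (free S (Y1 × Y2))
       (free_coalg S Y1) (free_coalg S Y2) (free_coalg S (Y1 × Y2))
       (fmap S (fst Y1 Y2)) (fmap S (snd Y1 Y2)).
Proof.
  destruct (xi_iso _ S Y1 Y2) as [I1 I2].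
  apply (transport S (P := tens S (free S Y1) (free S Y2)) (P' := free S (Y1 × Y2))
     (bP := tens_coalg S (free S Y1) (free S Y2) (free_coalg S Y1) (free_coalg S Y2))
     (p1d S (free S Y1) (free S Y2) (free_coalg S Y2)) (p2d S (free S Y1) (free S Y2) (free_coalg S Y1))
     _ _ (xi S Y1 Y2) (xi_inv S Y1 Y2)).
  - apply tens_product; apply free_coalg_is.
  - apply xi_coalg.
  - apply (coalg_iso_inv S (P:=tens S (free S Y1) (free S Y2)) (P':=free S (Y1 × Y2)) (xi S Y1 Y2) (xi_inv S Y1 Y2)); [apply xi_coalg | exact I2 | exact I1].
  - exact I2.
  - exact I1.
  - unfold p1d, u_b, free_coalg, unitA.
    change (acar (free S Y1)) with (T S Y1). change (acar (free S Y2)) with (T S Y2).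
    assert (Efst: fst Y1 Y2 = fst Y1 one ∘ pmap (idm Y1) (bang Y2)) by (psimp; reflexivity).
    rewrite Efst, fmap_comp. nrm.
    pose proof (xi_nat _ S Y1 Y1 Y2 one (idm Y1) (bang Y2)) as XN. rewrite fmap_id in XN.
    rw (eq_sym XN). rw (xi_runit _ S Y1).
    rewrite (fmap_eq2 S (bang_comp (eta S Y2))). reflexivity.
  - unfold p2d, u_b, free_coalg, unitA.
    change (acar (free S Y1)) with (T S Y1). change (acar (free S Y2)) with (T S Y2).
    assert (Esnd: snd Y1 Y2 = snd one Y2 ∘ pmap (bang Y1) (idm Y2)) by (psimp; reflexivity).
    rewrite Esnd, fmap_comp. nrm.
    pose proof (xi_nat _ S Y1 one Y2 Y2 (bang Y1) (idm Y2)) as XN. rewrite fmap_id in XN.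
    rw (eq_sym XN). rw (xi_lunit _ S Y2).
    rewrite (fmap_eq2 S (bang_comp (eta S Y1))). reflexivity.
Qed.

End Pr6.
Theorem proposition6p6 :
  forall (C : CartCat) (S : Setting C),
  (* d_b and u_b are Tbar-coalgebra homomorphisms and form a comonoid *)
  (forall (A : Alg S) (b : hom (acar A) (T S (acar A))),
     is_coalg S A b ->
     is_coalg_hom S A (tens S A A) b (tens_coalg S A A b b) (d_b S A b) /\
     is_coalg_hom S A (unitA S) b (free_coalg S one) (u_b S A b) /\
     alpha S A A A
       ∘ tmap S (A := A) (A' := tens S A A) (B := A) (B' := A)
           (d_b S A b) (idm (acar A))
       ∘ d_b S A b
     = tmap S (A := A) (A' := A) (B := A) (B' := tens S A A)
           (idm (acar A)) (d_b S A b)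
       ∘ d_b S A b /\
     lam S A
       ∘ tmap S (A := A) (A' := unitA S) (B := A) (B' := A)
           (u_b S A b) (idm (acar A))
       ∘ d_b S A b = idm (acar A) /\
     rho S A
       ∘ tmap S (A := A) (A' := A) (B := A) (B' := unitA S)
           (idm (acar A)) (u_b S A b)
       ∘ d_b S A b = idm (acar A)) /\
  (* final object of CoAlg(Tbar): T(1) with coalgebra T(eta_1) *)
  is_coalg S (unitA S) (free_coalg S one) /\
  coalg_terminal S (unitA S) (free_coalg S one) /\
  (* binary products in CoAlg(Tbar): the tensor of carrier algebras *)
  (forall (A1 A2 : Alg S) (b1 : hom (acar A1) (T S (acar A1)))
          (b2 : hom (acar A2) (T S (acar A2))),
     is_coalg S A1 b1 -> is_coalg S A2 b2 ->
     is_coalg S (tens S A1 A2) (tens_coalg S A1 A2 b1 b2) /\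
     coalg_product S A1 A2 (tens S A1 A2) b1 b2 (tens_coalg S A1 A2 b1 b2)
       (rho S A1 ∘ tmap S (A := A1) (A' := A1) (B := A2) (B' := unitA S)
                      (idm (acar A1)) (u_b S A2 b2))
       (lam S A2 ∘ tmap S (A := A1) (A' := unitA S) (B := A2) (B' := A2)
                      (u_b S A1 b1) (idm (acar A2)))) /\
  (* the functor Y |-> (T Y, mu_Y, T(eta_Y)) into CoAlg(Tbar) ... *)
  (forall Y : C, is_coalg S (free S Y) (free_coalg S Y)) /\
  (forall (Y Y' : C) (f : hom Y Y'),
     is_coalg_hom S (free S Y) (free S Y') (free_coalg S Y) (free_coalg S Y') (fmap S f)) /\
  (* ... preserves finite products *)
  coalg_terminal S (free S one) (free_coalg S one) /\
  (forall Y1 Y2 : C,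
     coalg_product S (free S Y1) (free S Y2) (free S (Y1 × Y2))
       (free_coalg S Y1) (free_coalg S Y2) (free_coalg S (Y1 × Y2))
       (fmap S (fst Y1 Y2)) (fmap S (snd Y1 Y2))).
Proof.
  intros C S. split; [|split; [|split; [|split; [|split; [|split; [|split]]]]]].
  - intros A b Hb. split; [apply d_coalg; exact Hb|]. split; [apply u_coalg; exact Hb|].
    split; [apply coassoc; exact Hb|]. split; [apply counitL; exact Hb | apply counitR; exact Hb].
  - apply free_coalg_is.
  - apply terminal.
  - intros A1 A2 b1 b2 H1 H2. split; [apply tc_is_coalg; assumption|].
    exact (tens_product S A1 A2 b1 b2 H1 H2).
  - apply free_coalg_is.
  - apply fmap_coalg_hom.
  - apply terminal.
  - apply free_product.
Qed.
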